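(* Let $\mathcal D$ be a distribution of $(p,y)\in[0,1]\times\{0,1\}$ and $m^*=m^*(\mathcal D)$. If $m^*=+\infty$, then $\mathsf{SCDL}(\mathcal D)=0$. If $m^*<+\infty$, then (1) $\mathsf{SCDL}(\mathcal D)=\max\{\mathsf{SCDL}_{m^*}(\mathcal D),1/m^*\}\in[1/m^*,2/m^* )$, and (2) $\mathsf{SCDL}_{2m^*}(\mathcal D)\ge\mathsf{SCDL}(\mathcal D)$.
   Context: For $x\in\mathbb R$ write $x_+=\max\{x,0\}$. For a distribution $\mathcal D$ of $(p,y)\in[0,1]\times\{0,1\}$, a positive integer $m$ and $i\in\{0,\ldots,m\}$, let $w_i(p)=(1-|mp-i|)_+$, $\pi_i=\mathbb E_{\mathcal D}[w_i(p)]$ and $q_i=\mathbb E_{\mathcal D}[w_i(p)y]/\pi_i$ (terms with $\pi_i=0$ are $0$). Define $$\mathsf{SCDL}_m(\mathcal D)=\max_{i=0,\ldots,m}\Big(\sum_{j=0}^{i}\pi_j\big(q_j-\tfrac{i+1}{m}\big)_+ +\sum_{j=i+1}^{m}\pi_j\big(\tfrac im-q_j\big)_+\Big),\quad \mathsf{SCDL}(\mathcal D)=\inf_{m\in\{2^1,2^2,\ldots\}}\max\{\mathsf{SCDL}_m(\mathcal D),1/m\}.$$ $m^*(\mathcal D)$ is the smallest $m\in\{2^1,2^2,\ldots\}$ such that $\mathsf{SCDL}_{2m}(\mathcal D)\ge1/m$, and $m^*(\mathcal D)=+\infty$ if no such $m$ exists. *)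

(* Defs.v *)
From HB Require Import structures.
From mathcomp Require Import all_boot all_order all_algebra.
From mathcomp Require Import all_classical all_reals all_analysis.
Set Implicit Arguments. Unset Strict Implicit. Unset Printing Implicit Defensive.
Import Order.TTheory GRing.Theory Num.Theory.
Import numFieldNormedType.Exports.
Local Open Scope classical_set_scope.
Local Open Scope ring_scope.

(* A distribution D of (p,y) in [0,1] x {0,1} is represented as the joint law
   of a pair of random variables (p, y) on a probability space (T, P). *)

Section SCDL.
Context {d : measure_display} {T : measurableType d} {R : realType}.

Definition pos_part (x : R) : R := Num.max x 0.

Definition wgt (m i : nat) (t : R) : R := pos_part (1 - `|m%:R * t - i%:R|).

Definition Exp (P : probability T R) (f : T -> R) : R :=
  fine (\int[P]_x (f x)%:E)%E.

Definition pi_ (P : probability T R) (p : T -> R) (m i : nat) : R :=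
  Exp P (fun x => wgt m i (p x)).

Definition q_ (P : probability T R) (p y : T -> R) (m i : nat) : R :=
  if pi_ P p m i == 0 then 0
  else Exp P (fun x => wgt m i (p x) * y x) / pi_ P p m i.

Definition SCDL_m (P : probability T R) (p y : T -> R) (m : nat) : R :=
  \big[Num.max/0]_(0 <= i < m.+1)
    ( \sum_(0 <= j < i.+1)
         pi_ P p m j * pos_part (q_ P p y m j - i.+1%:R / m%:R)
    + \sum_(i.+1 <= j < m.+1)
         pi_ P p m j * pos_part (i%:R / m%:R - q_ P p y m j)).

Definition SCDL (P : probability T R) (p y : T -> R) : R :=
  inf [set v : R | exists2 k : nat, (0 < k)%N &
         v = Num.max (SCDL_m P p y (2 ^ k)%N) (1 / (2 ^ k)%:R)].

Definition is_mstar (P : probability T R) (p y : T -> R) (m : nat) : Prop :=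
  (exists2 k : nat, (0 < k)%N & m = (2 ^ k)%N) /\
  1 / m%:R <= SCDL_m P p y (2 * m)%N /\
  (forall k : nat, (0 < k)%N -> (2 ^ k < m)%N ->
     SCDL_m P p y (2 * 2 ^ k)%N < 1 / (2 ^ k)%:R).

Definition mstar_infinite (P : probability T R) (p y : T -> R) : Prop :=
  forall k : nat, (0 < k)%N -> SCDL_m P p y (2 * 2 ^ k)%N < 1 / (2 ^ k)%:R.

End SCDL.

(* Main.v *)
Require Import Defs.
From HB Require Import structures.
From mathcomp Require Import all_boot all_order all_algebra.
From mathcomp Require Import all_classical all_reals all_analysis.
From mathcomp Require Import measurable_realfun ring lra zify.
Import Order.TTheory GRing.Theory Num.Theory.
Import numFieldNormedType.Exports.
Local Open Scope classical_set_scope.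
Local Open Scope ring_scope.


Set Implicit Arguments. Unset Strict Implicit.
Section Alg.
Variable R : realType.
Implicit Types (f g a b : nat -> R).

Lemma pos_ge0 (x : R) : 0 <= pos_part x.
Proof. by rewrite /pos_part le_max lexx orbT. Qed.

Lemma pos_ge (x : R) : x <= pos_part x.
Proof. by rewrite /pos_part le_max lexx. Qed.

Lemma pos_le (x z : R) : x <= z -> pos_part x <= pos_part z.
Proof.
move=> xz; rewrite {1}/pos_part ge_max pos_ge0 andbT.
exact: le_trans xz (pos_ge z).
Qed.

Lemma pos3 (x u v : R) : pos_part (x + u / 2 + v / 2) <=
  pos_part x + pos_part u / 2 + pos_part v / 2.
Proof.
rewrite {1}/pos_part ge_max; have := pos_ge x; have := pos_ge u; have := pos_ge v.
have := pos_ge0 x; have := pos_ge0 u; have := pos_ge0 v.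
move=> *; apply/andP; split; lra.
Qed.

Lemma pos2 (x u : R) : pos_part (x + u / 2) <= pos_part x + pos_part u / 2.
Proof.
rewrite {1}/pos_part ge_max; have := pos_ge x; have := pos_ge u.
have := pos_ge0 x; have := pos_ge0 u.
move=> *; apply/andP; split; lra.
Qed.

Definition U f j := match j with
  | 0%N => f 0%N + f 1%N / 2
  | j'.+1 => f (2 * j').+2 + f (2 * j').+1 / 2 + f (2 * j').+3 / 2 end.

Lemma sumL f i : \sum_(0 <= j < i.+1) U f j =
  \sum_(0 <= k < (2 * i).+1) f k + f (2 * i).+1 / 2.
Proof.
elim: i => [|i IH]; first by rewrite !big_nat1.
rewrite big_nat_recr //= IH.
have -> : (2 * i.+1 = (2 * i).+2)%N by rewrite mulnS.
rewrite !big_nat_recr //=; lra.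
Qed.

Lemma sumR g i M : (i <= M)%N ->
  \sum_(i <= j < M) U g j.+1 + g (2 * M).+1 / 2 =
  g (2 * i).+1 / 2 + \sum_((2 * i).+2 <= k < (2 * M).+2) g k.
Proof.
elim: M => [|M IH]; first by rewrite leqn0 => /eqP ->; rewrite !big_geq //; lra.
rewrite leq_eqVlt => /orP[/eqP <-|]; first by rewrite !big_geq //; lra.
rewrite ltnS => /[dup] iM /IH IH'.
rewrite big_nat_recr //=.
have -> : (2 * M.+1 = (2 * M).+2)%N by rewrite mulnS.
rewrite big_nat_recr /=; last by lia.
rewrite big_nat_recr /=; last by lia.
lra.
Qed.

Definition vsum n a b (i : nat) : R :=
  \sum_(0 <= j < i.+1) pos_part (b j - i.+1%:R / n%:R * a j)
  + \sum_(i.+1 <= j < n.+1) pos_part (i%:R / n%:R * a j - b j).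

Lemma pos_mono (x c c' z : R) : 0 <= z -> c' <= c -> pos_part (x - c * z) <= pos_part (x - c' * z).
Proof. by move=> z0 cc; apply: pos_le; have := ler_wpM2r z0 cc; lra. Qed.

Lemma pos_mono2 (x c c' z : R) : 0 <= z -> c' <= c -> pos_part (c' * z - x) <= pos_part (c * z - x).
Proof. by move=> z0 cc; apply: pos_le; have := ler_wpM2r z0 cc; lra. Qed.

Lemma divn_le (x x' n : nat) : (x' <= x)%N -> x'%:R / n%:R <= x%:R / n%:R :> R.
Proof. by move=> h; rewrite ler_wpM2r ?invr_ge0 ?ler0n ?ler_nat. Qed.

Lemma mono_step m a2 b2 A B i :
  (0 < m)%N -> (i < m)%N ->
  (forall k, 0 <= a2 k) ->
  a2 (2 * m).+1 = 0 -> b2 (2 * m).+1 = 0 ->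
  A 0%N = a2 0%N + a2 1%N / 2 -> B 0%N = b2 0%N + b2 1%N / 2 ->
  (forall j, (j < m)%N -> A j.+1 = a2 (2 * j).+2 + a2 (2 * j).+1 / 2 + a2 (2 * j).+3 / 2) ->
  (forall j, (j < m)%N -> B j.+1 = b2 (2 * j).+2 + b2 (2 * j).+1 / 2 + b2 (2 * j).+3 / 2) ->
  vsum m A B i <= Num.max (vsum (2 * m) a2 b2 (2 * i)) (vsum (2 * m) a2 b2 (2 * i).+1).
Proof.
move=> m0 im a0 a2m b2m A0 B0 AS BS.
set c : R := i.+1%:R / m%:R; set dd : R := i%:R / m%:R.
set f := fun k => pos_part (b2 k - c * a2 k).
set g := fun k => pos_part (dd * a2 k - b2 k).
have mR : (m%:R : R) != 0 by rewrite pnatr_eq0 -lt0n.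
have ec : (2 * i).+2%:R / (2 * m)%:R = c :> R.
  have -> : ((2 * i).+2 = 2 * i.+1)%N by lia.
  by rewrite !natrM /c; field; rewrite mR.
have ed : (2 * i)%:R / (2 * m)%:R = dd :> R.
  by rewrite !natrM /dd; field; rewrite mR.
have H1 : \sum_(0 <= j < i.+1) pos_part (B j - c * A j) <= \sum_(0 <= j < i.+1) U f j.
  apply: ler_sum_nat => -[|j] ji.
    rewrite A0 B0 /=; apply: (le_trans _ (pos2 _ _)); apply: pos_le; lra.
  rewrite AS ?BS; try lia.
  rewrite /=; apply: (le_trans _ (pos3 _ _ _)); apply: pos_le; lra.
have H2 : \sum_(i.+1 <= j < m.+1) pos_part (dd * A j - B j) <= \sum_(i <= j < m) U g j.+1.
  rewrite big_add1 /=; apply: ler_sum_nat => j jm.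
  rewrite AS ?BS; try lia.
  rewrite /=; apply: (le_trans _ (pos3 _ _ _)); apply: pos_le; lra.
have g2m : g (2 * m).+1 = 0 by rewrite /g a2m b2m mulr0 subr0 /pos_part maxxx.
have HR := @sumR g i m (ltnW im); rewrite g2m mul0r addr0 in HR.
rewrite (big_nat_recr _ _ _ (_ : (2 * i).+2 <= (2 * m).+1)%N) /= ?g2m ?addr0 in HR; last by lia.
have HL := sumL f i.
have V1 : vsum m A B i <= \sum_(0 <= k < (2 * i).+1) f k + f (2 * i).+1 / 2 +
   (g (2 * i).+1 / 2 + \sum_((2 * i).+2 <= k < (2 * m).+1) g k).
  by rewrite -HL -HR; apply: lerD.
have W1 : \sum_(0 <= k < (2 * i).+1) f k + g (2 * i).+1 + \sum_((2 * i).+2 <= k < (2 * m).+1) g k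
   <= vsum (2 * m) a2 b2 (2 * i).
  rewrite /vsum (big_ltn (_ : (2 * i).+1 < (2 * m).+1)%N); last by lia.
  rewrite ed -addrA; apply: lerD.
    apply: ler_sum_nat => k _; rewrite /f; apply: pos_mono => //.
    by rewrite -ec divn_le.
  by rewrite /g.
have W2 : \sum_(0 <= k < (2 * i).+1) f k + f (2 * i).+1 + \sum_((2 * i).+2 <= k < (2 * m).+1) g k
   <= vsum (2 * m) a2 b2 (2 * i).+1.
  rewrite /vsum ec; apply: lerD; first by rewrite [X in _ <= X]big_nat_recr.
  apply: ler_sum_nat => k _; rewrite /g; apply: pos_mono2 => //.
  by rewrite -ed divn_le.
have M1 : vsum (2 * m) a2 b2 (2 * i) <= Num.max (vsum (2 * m) a2 b2 (2 * i)) (vsum (2 * m) a2 b2 (2 * i).+1) by rewrite le_max lexx.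
have M2 : vsum (2 * m) a2 b2 (2 * i).+1 <= Num.max (vsum (2 * m) a2 b2 (2 * i)) (vsum (2 * m) a2 b2 (2 * i).+1) by rewrite le_max lexx orbT.
lra.
Qed.

Definition w1 (u : R) := pos_part (1 - `|u|).

Lemma wcase u : (u <= -1 /\ w1 u = 0) \/ (-1 <= u <= 0 /\ w1 u = 1 + u) \/
  (0 <= u <= 1 /\ w1 u = 1 - u) \/ (1 <= u /\ w1 u = 0).
Proof.
rewrite /w1 /pos_part.
have [u0|u0] := leP 0 u.
  rewrite ger0_norm //.
  have [u1|u1] := leP u 1.
    by right; right; left; split; [apply/andP; split; lra | apply/max_idPl; lra].
  by right; right; right; split; [lra | apply/max_idPr; lra].
rewrite ltr0_norm //.
have [u1|u1] := leP (-1) u.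
  by right; left; split; [apply/andP; split; lra | rewrite opprK; apply/max_idPl; lra].
by left; split; [lra | apply/max_idPr; lra].
Qed.

Lemma w_id u1 u2 u3 u4 : u2 = 2 * u1 -> u3 = u2 + 1 -> u4 = u2 - 1 ->
  w1 u1 = w1 u2 + w1 u3 / 2 + w1 u4 / 2.
Proof.
move=> e2 e3 e4.
case: (wcase u1) => [[h1 ->]|[[/andP[h1 h1'] ->]|[[/andP[h1 h1'] ->]|[h1 ->]]]];
case: (wcase u2) => [[h2 ->]|[[/andP[h2 h2'] ->]|[[/andP[h2 h2'] ->]|[h2 ->]]]];
try (exfalso; lra);
case: (wcase u3) => [[h3 ->]|[[/andP[h3 h3'] ->]|[[/andP[h3 h3'] ->]|[h3 ->]]]];
try (exfalso; lra);
case: (wcase u4) => [[h4 ->]|[[/andP[h4 h4'] ->]|[[/andP[h4 h4'] ->]|[h4 ->]]]]; lra.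
Qed.

Lemma w_zero u : u <= -1 -> w1 u = 0.
Proof. by move=> h; case: (wcase u) => [[_ ->]|[[/andP[h1 h1'] ->]|[[/andP[h1 h1'] ->]|[h1 ->]]]] //; lra. Qed.

Lemma w_bd u : 0 <= w1 u <= 1.
Proof. by case: (wcase u) => [[_ ->]|[[/andP[h1 h1'] ->]|[[/andP[h1 h1'] ->]|[h1 ->]]]]; apply/andP; split; lra. Qed.
End Alg.
Unset Implicit Arguments. Set Strict Implicit.



Section W.
Variable R : realType.

Lemma w_zero' (u : R) : 1 <= u -> w1 u = 0.
Proof. by move=> h; case: (wcase u) => [[h1 ->]|[[/andP[h1 h1'] ->]|[[/andP[h1 h1'] ->]|[h1 ->]]]] //; lra. Qed.

Lemma wgt_ref0 m (t : R) : 0 <= t -> wgt m 0 t = wgt (2 * m) 0 t + wgt (2 * m) 1 t / 2.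
Proof.
move=> t0.
have mt : 0 <= m%:R * t by rewrite mulr_ge0.
rewrite [LHS](@w_id _ (m%:R * t - 0%:R) ((2 * m)%:R * t - 0%:R) ((2 * m)%:R * t - 0%:R + 1) ((2 * m)%:R * t - 1%:R)).
- rewrite (w_zero' ((2 * m)%:R * t - 0%:R + 1)); last by rewrite natrM; lra.
  by rewrite mul0r addr0.
- by rewrite natrM; lra.
- by [].
- by lra.
Qed.

Lemma wgt_refS m j (t : R) : wgt m j.+1 t =
  wgt (2 * m) (2 * j).+2 t + wgt (2 * m) (2 * j).+1 t / 2 + wgt (2 * m) (2 * j).+3 t / 2.
Proof.
apply: (@w_id _ (m%:R * t - j.+1%:R)); rewrite -!natr1 !natrM; lra.
Qed.

Lemma wgt_top m (t : R) : t <= 1 -> wgt (2 * m) (2 * m).+1 t = 0.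
Proof.
move=> t1; apply: w_zero.
have := ler_wpM2l (ler0n R (2 * m)) t1; rewrite mulr1 -natr1; lra.
Qed.

Lemma wgt_bd m i (t : R) : 0 <= wgt m i t <= 1.
Proof. exact: w_bd. Qed.
End W.

Lemma int_bd (d : measure_display) (T : measurableType d) (R : realType)
  (P : probability T R) (f : T -> R) :
  measurable_fun setT f -> (forall x, `|f x| <= 1) -> P.-integrable setT (EFin \o f).
Proof.
move=> mf bf; apply: measurable_bounded_integrable => //.
  apply: (@le_lt_trans _ _ 1%E); [exact: probability_le1 | exact: ltry].
exists 1; split => // M M1 x _ /=; exact: (le_trans (bf x) (ltW M1)).
Qed.

Lemma wgt_meas (d : measure_display) (T : measurableType d) (R : realType)
  (p : T -> R) m i : measurable_fun setT p -> measurable_fun setT (fun x => wgt m i (p x)).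
Proof.
move=> mp; rewrite /wgt /pos_part.
apply: (measurable_maxr (f := fun x => 1 - `|m%:R * p x - i%:R|) (g := cst 0)); last exact: measurable_cst.
apply: measurable_funB; first exact: measurable_cst.
apply: measurableT_comp => //; apply: measurable_funB; last exact: measurable_cst.
by apply: measurable_funM => //; exact: measurable_cst.
Qed.

Lemma int_add (d : measure_display) (T : measurableType d) (R : realType)
  (P : probability T R) (f g : T -> R) :
  P.-integrable setT (EFin \o f) -> P.-integrable setT (EFin \o g) ->
  P.-integrable setT (EFin \o (fun x => f x + g x)).
Proof.
move=> hf hg.
rewrite (_ : (EFin \o (fun x => f x + g x)) = ((EFin \o f) \+ (EFin \o g))%E) //.
exact: integrableD.
Qed.

Section M.
Variables (d : measure_display) (T : measurableType d) (R : realType)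
  (P : probability T R) (p y : T -> R).
Hypotheses (mp : measurable_fun setT p) (my : measurable_fun setT y)
  (hp : forall x, 0 <= p x <= 1) (hy : forall x, y x = 0 \/ y x = 1).

Definition E (h : T -> R) m j := Exp P (fun x => wgt m j (p x) * h x).

Definition good (h : T -> R) := measurable_fun setT h /\ forall x, 0 <= h x <= 1.

Lemma good1 : good (cst 1).
Proof. by split; [exact: measurable_cst | move=> x; rewrite ler01 lexx]. Qed.

Lemma goody : good y.
Proof. by split => // x; case: (hy x) => ->; rewrite ?lexx ?ler01. Qed.

Lemma int_w h m j : good h -> P.-integrable setT (EFin \o (fun x => wgt m j (p x) * h x)).
Proof.
move=> [mh bh]; apply: int_bd.
  by apply: measurable_funM => //; exact: wgt_meas.
move=> x; have /andP[w0 w1] := @wgt_bd R m j (p x); have /andP[h0 h1] := bh x.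
rewrite ger0_norm ?mulr_ge0 //.
by rewrite -(mulr1 1) ler_pM.
Qed.

Lemma int_half h m j : good h -> P.-integrable setT (EFin \o (fun x => wgt m j (p x) * h x * 2^-1)).
Proof.
move=> [mh bh]; apply: int_bd.
  apply: measurable_funM; last exact: measurable_cst.
  by apply: measurable_funM => //; exact: wgt_meas.
move=> x; have /andP[w0 w1] := @wgt_bd R m j (p x); have /andP[h0 h1] := bh x.
rewrite ger0_norm ?mulr_ge0 ?invr_ge0 ?ler0n //.
have : wgt m j (p x) * h x <= 1 by rewrite -(mulr1 1) ler_pM.
have : 0 <= wgt m j (p x) * h x by rewrite mulr_ge0.
lra.
Qed.

Lemma ExpE (f : T -> R) : Exp P f = Rintegral P setT f.
Proof. by []. Qed.

Lemma E_ref0 h m : good h -> E h m 0 = E h (2 * m) 0 + E h (2 * m) 1 / 2.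
Proof.
move=> gh; rewrite /E !ExpE.
rewrite (@eq_Rintegral _ _ _ _ _ (fun x => wgt (2 * m) 0 (p x) * h x + (wgt (2 * m) 1 (p x) * h x) * 2^-1)); last first.
  move=> x _; rewrite wgt_ref0; last by case/andP: (hp x).
  by rewrite mulrDl mulrAC.
rewrite RintegralD //; [|exact: int_w| exact: int_half].
by rewrite RintegralZr //; exact: int_w.
Qed.

Lemma E_refS h m j : good h -> E h m j.+1 =
  E h (2 * m) (2 * j).+2 + E h (2 * m) (2 * j).+1 / 2 + E h (2 * m) (2 * j).+3 / 2.
Proof.
move=> gh; rewrite /E !ExpE.
rewrite (@eq_Rintegral _ _ _ _ _ (fun x => (wgt (2 * m) (2 * j).+2 (p x) * h x
   + (wgt (2 * m) (2 * j).+1 (p x) * h x) * 2^-1) + (wgt (2 * m) (2 * j).+3 (p x) * h x) * 2^-1)); last first.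
  by move=> x _; rewrite wgt_refS !mulrDl !(mulrAC _ 2^-1).
rewrite RintegralD //; last exact: int_half.
  rewrite RintegralD //; [|exact: int_w| exact: int_half].
  by rewrite !RintegralZr //; exact: int_w.
apply: int_add; [exact: int_w | exact: int_half].
Qed.

Lemma E_top h m : good h -> E h (2 * m) (2 * m).+1 = 0.
Proof.
move=> gh; rewrite /E ExpE (@eq_Rintegral _ _ _ _ _ (fun=> 0)); last first.
  by move=> x _; rewrite wgt_top ?mul0r //; case/andP: (hp x).
by rewrite Rintegral_cst // mul0r.
Qed.

Lemma E_ge0 h m j : good h -> 0 <= E h m j.
Proof.
move=> [_ bh]; apply: Rintegral_ge0 => x _.
have /andP[w0 _] := @wgt_bd R m j (p x); have /andP[h0 _] := bh x.
by rewrite mulr_ge0.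
Qed.

Lemma E_le h m j : good h -> E h m j <= E (cst 1) m j.
Proof.
move=> gh; apply: le_Rintegral => //; [exact: int_w | exact: int_w good1 |].
move=> x _; have /andP[w0 _] := @wgt_bd R m j (p x); have /andP[_ h1] := gh.2 x.
by rewrite /= ler_wpM2l.
Qed.

Lemma E1_le1 m j : E (cst 1) m j <= 1.
Proof.
rewrite /E ExpE; apply: (@le_trans _ _ (Rintegral P setT (cst 1))).
  apply: le_Rintegral => //; [exact: int_w good1 | |].
    by apply: int_bd; [exact: measurable_cst | move=> x; rewrite normr1].
  by move=> x _; have /andP[_ w1] := @wgt_bd R m j (p x); rewrite mulr1.
rewrite Rintegral_cst // mul1r (_ : fine _ = 1) //.
by have e := probability_setT P; rewrite /= -[X in _ = X]/(fine 1%E); congr fine; exact: e.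
Qed.

Lemma piE m j : pi_ P p m j = E (cst 1) m j.
Proof. by rewrite /pi_ /E !ExpE; apply: eq_Rintegral => x _; rewrite mulr1. Qed.

Lemma qE m j : q_ P p y m j = if E (cst 1) m j == 0 then 0 else E y m j / E (cst 1) m j.
Proof. by rewrite /q_ piE. Qed.

Lemma term1 (a b c : R) : 0 <= b <= a ->
  a * pos_part ((if a == 0 then 0 else b / a) - c) = pos_part (b - c * a).
Proof.
move=> /andP[b0 ba]; case: eqP => [a0|/eqP a0].
  subst a; have -> : b = 0 by apply/le_anti; rewrite ba b0.
  by rewrite mul0r mulr0 subrr /pos_part maxxx.
have a0' : 0 <= a by apply: le_trans ba.
rewrite /pos_part maxr_pMr // mulr0; congr Num.max; field; exact: a0.
Qed.

Lemma term2 (a b c : R) : 0 <= b <= a ->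
  a * pos_part (c - (if a == 0 then 0 else b / a)) = pos_part (c * a - b).
Proof.
move=> /andP[b0 ba]; case: eqP => [a0|/eqP a0].
  subst a; have -> : b = 0 by apply/le_anti; rewrite ba b0.
  by rewrite mul0r mulr0 subrr /pos_part maxxx.
have a0' : 0 <= a by apply: le_trans ba.
rewrite /pos_part maxr_pMr // mulr0; congr Num.max; field; exact: a0.
Qed.

Lemma Ebd m j : 0 <= E y m j <= E (cst 1) m j.
Proof. by rewrite E_ge0 ?E_le //; exact: goody. Qed.

Lemma SCDL_val m : SCDL_m P p y m =
  \big[Num.max/0]_(0 <= i < m.+1) vsum m (E (cst 1) m) (E y m) i.
Proof.
apply: eq_bigr => i _; rewrite /vsum; congr (_ + _); apply: eq_bigr => j _.
  by rewrite piE qE term1 // Ebd.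
by rewrite piE qE term2 // Ebd.
Qed.

Lemma SCDL_ge0 m : 0 <= SCDL_m P p y m.
Proof.
rewrite /SCDL_m; apply: (big_ind (fun x => 0 <= x)) => [//|x z hx hz|i _].
  by rewrite le_max hx.
by apply: addr_ge0; apply: sumr_ge0 => j _; rewrite mulr_ge0 ?pos_ge0 // piE; apply: E_ge0; exact: good1.
Qed.

Lemma SCDL_mono m : (0 < m)%N -> SCDL_m P p y m <= SCDL_m P p y (2 * m).
Proof.
move=> m0; have := SCDL_ge0 (2 * m); rewrite !SCDL_val => H0.
rewrite big_nat_cond; apply: bigmax_le => // i /andP[/andP[_ im] _].
have mem k : (k < (2 * m).+1)%N -> vsum (2 * m) (E (cst 1) (2 * m)) (E y (2 * m)) k <=
    \big[Num.max/0]_(0 <= i < (2 * m).+1) vsum (2 * m) (E (cst 1) (2 * m)) (E y (2 * m)) i.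
  by move=> km; apply: le_bigmax_seq => //; rewrite mem_index_iota.
rewrite ltnS leq_eqVlt in im; case/orP: im => [/eqP ->|im].
  apply: (le_trans _ H0); rewrite /vsum [X in _ + X]big_geq // addr0.
  rewrite big1 // => j _; apply/max_idPr.
  have /andP[b0 ba] := Ebd m j.
  have c1 : 1 <= m.+1%:R / m%:R :> R.
    by rewrite ler_pdivlMr ?ltr0n // mul1r ler_nat.
  have := ler_wpM2r (le_trans b0 ba) c1; rewrite mul1r; lra.
apply: le_trans (mono_step (a2 := E (cst 1) (2 * m)) (b2 := E y (2 * m)) m0 im _ _ _ _ _ _ _) _.
- by move=> k; apply: E_ge0; exact: good1.
- exact: E_top good1.
- exact: E_top goody.
- exact: E_ref0 good1.
- exact: E_ref0 goody.
- by move=> j _; exact: E_refS good1.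
- by move=> j _; exact: E_refS goody.
by rewrite ge_max !mem //; lia.
Qed.

Lemma SCDL2 : SCDL_m P p y 2 <= 1 / 2.
Proof.
rewrite SCDL_val big_nat_cond; apply: bigmax_le => // i /andP[/andP[_ im] _].
have /andP[b0 a0] := Ebd 2 0; have /andP[b1 a1] := Ebd 2 1; have /andP[b2 a2] := Ebd 2 2.
have c0 := E1_le1 2 0; have c1 := E1_le1 2 1; have c2 := E1_le1 2 2.
have P1 : forall x M : R, x <= M -> 0 <= M -> pos_part x <= M.
  by move=> x M xM M0; rewrite /pos_part ge_max xM.
case: i im => [|[|[|//]]] _; rewrite /vsum.
- rewrite big_nat1 big_ltn // big_nat1.
  apply: (le_trans (lerD (P1 _ (1/2) _ _) (lerD (P1 _ 0 _ _) (P1 _ 0 _ _)))); lra.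
- rewrite big_nat_recr // big_nat1 big_nat1.
  apply: (le_trans (lerD (lerD (P1 _ 0 _ _) (P1 _ 0 _ _)) (P1 _ (1/2) _ _))); lra.
- rewrite big_nat_recr // big_nat_recr // big_nat1 big_geq //.
  apply: (le_trans (lerD (lerD (lerD (P1 _ 0 _ _) (P1 _ 0 _ _)) (P1 _ 0 _ _)) (lexx 0))); lra.
Qed.
End M.



Section N.
Variable R : realType.
Lemma inv_le (a b : nat) : (0 < b)%N -> (b <= a)%N -> 1 / a%:R <= 1 / b%:R :> R.
Proof.
move=> b0 ba; rewrite !div1r lef_pV2 ?ler_nat // posrE ltr0n //; lia.
Qed.

Lemma half_lt (a : R) : 0 < a -> 1 / (2 * a) < 1 / a.
Proof. by move=> a0; rewrite !div1r invfM; have := invr_gt0 a; rewrite a0 => h; lra. Qed.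

Lemma two_div (a : nat) : (0 < a)%N -> 2 / (2 * a)%:R = 1 / a%:R :> R.
Proof. move=> a0; rewrite natrM; field; rewrite pnatr_eq0 -lt0n a0. done. Qed.
End N.

Section M2.
Variables (d : measure_display) (T : measurableType d) (R : realType)
  (P : probability T R) (p y : T -> R).
Hypotheses (mp : measurable_fun setT p) (my : measurable_fun setT y)
  (hp : forall x, 0 <= p x <= 1) (hy : forall x, y x = 0 \/ y x = 1).

Let S := [set v : R | exists2 k : nat, (0 < k)%N &
         v = Num.max (SCDL_m P p y (2 ^ k)%N) (1 / (2 ^ k)%:R)].

Lemma SE : SCDL P p y = inf S.
Proof. by []. Qed.

Lemma lbS v : S v -> 0 <= v.
Proof. by move=> [k _ ->]; rewrite le_max (@SCDL_ge0 _ _ _ P p y). Qed.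

Lemma hlb : has_lbound S.
Proof. by exists 0 => v; exact: lbS. Qed.

Lemma neS : S !=set0.
Proof. by exists (Num.max (SCDL_m P p y (2 ^ 1)%N) (1 / (2 ^ 1)%:R)); exists 1%N. Qed.

Lemma chain K k : (K <= k)%N -> SCDL_m P p y (2 ^ K)%N <= SCDL_m P p y (2 ^ k)%N.
Proof.
elim: k => [|k IH]; first by rewrite leqn0 => /eqP ->.
rewrite leq_eqVlt => /orP[/eqP ->//|]; rewrite ltnS => /IH h.
apply: le_trans h _; rewrite expnS; apply: (@SCDL_mono _ _ _ P p y mp my hp hy).
by rewrite expn_gt0.
Qed.

Lemma partA : mstar_infinite P p y -> SCDL P p y = 0.
Proof.
move=> hinf; rewrite SE.
have H k : (0 < k)%N -> inf S <= 1 / (2 ^ k)%:R.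
  move=> k0; apply: le_trans (ge_inf hlb (_ : S (Num.max (SCDL_m P p y (2 ^ k.+1)%N) (1 / (2 ^ k.+1)%:R)))) _.
    by exists k.+1.
  rewrite expnS ge_max; apply/andP; split; first exact/ltW/hinf.
  by rewrite natrM; apply/ltW/half_lt; rewrite ltr0n expn_gt0.
apply/le_anti/andP; split; last by apply: lb_le_inf; [exact: neS | move=> v; exact: lbS].
rewrite leNgt; apply/negP => i0.
have iv0 : 0 <= (inf S)^-1 by rewrite invr_ge0 ltW.
have := archi_boundP iv0; set n := Num.Def.archi_bound _ => hn.
have X0 : (0 : R) < (2 ^ n.+1)%:R by rewrite ltr0n expn_gt0.
have hk := H n.+1 isT.
have hn2 : (n%:R : R) <= (2 ^ n.+1)%:R by rewrite ler_nat; apply: ltnW; apply: (@leq_trans (2 ^ n)); [exact: ltn_expl | rewrite leq_exp2l].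
have h1 : 1 < inf S * (2 ^ n.+1)%:R.
  have e1 : inf S * (inf S)^-1 = 1 by rewrite mulfV // lt0r_neq0.
  by rewrite -[X in X < _]e1 ltr_pM2l //; apply: lt_le_trans hn hn2.
have h2 : inf S * (2 ^ n.+1)%:R <= 1.
  have := ler_wpM2r (ltW X0) hk; rewrite div1r mulVf //; exact: lt0r_neq0.
by have := lt_le_trans h1 h2; rewrite ltxx.
Qed.

Lemma partB m : is_mstar P p y m ->
  [/\ SCDL P p y = Num.max (SCDL_m P p y m) (1 / m%:R),
      1 / m%:R <= SCDL P p y,
      SCDL P p y < 2 / m%:R
    & SCDL P p y <= SCDL_m P p y (2 * m)%N].
Proof.
move=> [[K K0 ->] [h1 h2]].
set M := Num.max (SCDL_m P p y (2 ^ K)%N) (1 / (2 ^ K)%:R).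
have mK0 : (0 < 2 ^ K)%N by rewrite expn_gt0.
have Mlt0 : SCDL_m P p y (2 ^ K)%N < 2 / (2 ^ K)%:R.
  case: K K0 h1 h2 mK0 {M} => [//|[|K']] _ h1 h2 mK0.
    apply: le_lt_trans (@SCDL2 _ _ _ P p y mp my hy) _.
    by rewrite expn1 ltr_pM2r ?invr_gt0 ?ltr0n // ltr1n.
  have := h2 K'.+1 isT; rewrite ltn_exp2l // => /(_ (ltnSn _)).
  by rewrite -expnS (expnS 2 K'.+1) two_div // expn_gt0.
have Mlt : M < 2 / (2 ^ K)%:R.
  by rewrite gt_max Mlt0 /= ltr_pM2r ?invr_gt0 ?ltr0n // ltr1n.
have lbM : forall v, S v -> M <= v.
  move=> v [k k0 ->]; case: (ltngtP k K) => [kK|Kk|->//].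
  - apply/ltW/(lt_le_trans Mlt); rewrite le_max; apply/orP; right.
    case: K kK {M Mlt Mlt0} K0 h1 h2 mK0 => [//|K] kK _ _ _ _.
    rewrite expnS two_div ?expn_gt0 //; apply: inv_le; rewrite ?expn_gt0 // leq_exp2l //.
  - rewrite le_max; apply/orP; left.
    have := @chain K.+1 k Kk; rewrite expnS => hc.
    rewrite ge_max; apply/andP; split; last exact: le_trans h1 hc.
    apply: le_trans hc; apply: (@SCDL_mono _ _ _ P p y mp my hp hy) => //.
have eq : SCDL P p y = M.
  rewrite SE; apply/le_anti/andP; split.
    by apply: ge_inf; [exact: hlb | exists K].
  by apply: lb_le_inf; [exact: neS | exact: lbM].
rewrite eq; split => //.
- by rewrite le_max lexx orbT.
- rewrite ge_max h1 andbT; apply: (@SCDL_mono _ _ _ P p y mp my hp hy) => //.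
Qed.
End M2.

Theorem lemma3p5 (d : measure_display) (T : measurableType d) (R : realType)
  (P : probability T R) (p y : T -> R)
  (mp : measurable_fun setT p) (my : measurable_fun setT y)
  (hp : forall x, 0 <= p x <= 1) (hy : forall x, y x = 0 \/ y x = 1) :
  (mstar_infinite P p y -> SCDL P p y = 0) /\
  (forall m : nat, is_mstar P p y m ->
     [/\ SCDL P p y = Num.max (SCDL_m P p y m) (1 / m%:R),
         1 / m%:R <= SCDL P p y,
         SCDL P p y < 2 / m%:R
       & SCDL P p y <= SCDL_m P p y (2 * m)%N]).
Proof.
split; first by apply: partA.
by move=> m; apply: partB.
Qed.
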